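(* Let $n\ge1$, $m_1,\dots,m_n\ge1$ integers, $\mu\in(0,1)$, and let $X_{i,j}$, $i=1,\dots,n$, $j=1,\dots,m_i$, be i.i.d. $\mathrm{Bernoulli}(\mu)$. Define $\widehat\mu=\frac1n\sum_{i=1}^n\frac1{m_i}\sum_{j=1}^{m_i}X_{i,j}$ and, for $\lambda>0$, $M_\mu(\lambda)=\mathbb{E}\big[e^{n\lambda\,\mathrm{kl}(\widehat\mu\,|\,\mu)}\big]$. Let $m_{\min}=\min_i m_i$. If $\lambda>m_{\min}$, then $\sup_{0<\mu<1}M_\mu(\lambda)=+\infty$. In particular, there is no finite upper bound on $M_\mu(\lambda)$ that depends only on $n$ and $m_1,\dots,m_n$ and not on $\mu$.
   Context: $\mathrm{kl}(q|p)=q\log\frac qp+(1-q)\log\frac{1-q}{1-p}$ for $q\in[0,1]$, $p\in(0,1)$, with the convention $0\log 0=0$ (the KL divergence between Bernoulli distributions of means $q$ and $p$). *)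

(* Defs.v *)
From HB Require Import structures.
From mathcomp Require Import all_boot all_order all_algebra.
From mathcomp Require Import all_classical all_reals all_analysis.
Set Implicit Arguments. Unset Strict Implicit. Unset Printing Implicit Defensive.
Import Order.TTheory GRing.Theory Num.Theory.
Local Open Scope ring_scope.

Section Defs.
Variable R : realType.

Definition kl (q p : R) : R :=
  (if q == 0 then 0 else q * ln (q / p)) +
  (if q == 1 then 0 else (1 - q) * ln ((1 - q) / (1 - p))).

Definition Idx (n : nat) (m : 'I_n -> nat) : finType := {i : 'I_n & 'I_(m i)}.

Definition Sample (n : nat) (m : 'I_n -> nat) : finType := {ffun Idx m -> bool}.

Definition prob (n : nat) (m : 'I_n -> nat) (mu : R) (x : Sample m) : R :=
  \prod_(k : Idx m) (if x k then mu else 1 - mu).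

Definition muhat (n : nat) (m : 'I_n -> nat) (x : Sample m) : R :=
  (n%:R)^-1 * \sum_(i < n) ((m i)%:R^-1 *
     \sum_(j < m i) ((x (Tagged (fun i => 'I_(m i)) j) : nat)%:R)).

Definition Mgf (n : nat) (m : 'I_n -> nat) (mu lam : R) : R :=
  \sum_(x : Sample m) prob mu x * expR (n%:R * lam * kl (muhat x) mu).

End Defs.

(* m_min = min_i m_i (for n >= 1; the seed \max_i m_i is neutral then) *)
Definition mmax (n : nat) (m : 'I_n -> nat) : nat := (\max_(i < n) m i)%N.
Definition mmin (n : nat) (m : 'I_n -> nat) : nat :=
  \big[minn/mmax m]_(i < n) m i.

(* Main.v *)
Require Import Defs.
From HB Require Import structures.
From mathcomp Require Import all_boot all_order all_algebra.
From mathcomp Require Import all_classical all_reals all_analysis.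
From mathcomp Require Import ring lra.
Import Order.TTheory GRing.Theory Num.Theory.
Local Open Scope ring_scope.

Lemma ex_i0 (n : nat) (m : 'I_n -> nat) : (0 < n)%N -> exists i0, (m i0 <= mmin m)%N.
Proof.
move=> n0; pose j0 := Ordinal n0.
case: (@arg_minnP _ j0 xpredT m isT) => i _ Hi.
exists i; rewrite /mmin; apply: (big_ind (fun x => m i <= x)%N).
- rewrite /mmax. have := Hi j0 isT. have := @leq_bigmax (ordinal n) m j0. move=> h1 h2. exact: leq_trans h2 h1.
- by move=> a b ha hb; rewrite leq_min ha hb.
- by move=> j _; exact: Hi.
Qed.

Section S.
Variable R : realType.
Variables (n : nat) (m : 'I_n -> nat) (i0 : 'I_n).
Definition xs : Sample m := [ffun k : Idx m => tag k == i0].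

Lemma prob_xs (mu : R) : prob mu xs = mu ^+ m i0 * \prod_(i < n | i != i0) (1 - mu) ^+ m i.
Proof.
rewrite /prob.
have -> : \prod_(k : Idx m) (if xs k then mu else 1 - mu) =
   \prod_(i < n) \prod_(j : 'I_(m i)) (if i == i0 then mu else 1 - mu).
  rewrite (@sig_big_dep R 1 *%R _ (fun i => 'I_(m i)) xpredT (fun _ => xpredT) (fun i _ => if i == i0 then mu else 1 - mu)) /=.
  by apply: eq_bigr => -[i j] _; rewrite /xs ffunE.
rewrite (bigD1 i0) //= eqxx prodr_const card_ord; congr (_ * _).
by apply: eq_bigr => i /negbTE ->; rewrite prodr_const card_ord.
Qed.

Lemma muhat_xs : (0 < n)%N -> (forall i, (0 < m i)%N) -> @muhat R n m xs = n%:R^-1.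
Proof.
move=> n0 m0; rewrite /muhat.
rewrite (eq_bigr (fun i => ((i == i0 : nat)%:R : R))); last first.
  move=> i _; rewrite (eq_bigr (fun _ => ((i == i0 : nat)%:R : R))); last first.
    by move=> j _; rewrite /xs ffunE.
  rewrite sumr_const card_ord .
  rewrite -[X in _ * X]mulr_natr mulrC -mulrA mulfV ?mulr1 //.
  by rewrite pnatr_eq0 -lt0n m0.
rewrite (bigD1 i0) //= eqxx big1 ?addr0 ?mulr1 //.
by move=> i /negbTE ->.
Qed.
End S.

Lemma kl_lb (R : realType) (mu q : R) : 0 < mu < 1 -> 0 < q <= 1 ->
  q * (ln q - ln mu) + (if q == 1 then 0 else (1 - q) * ln (1 - q)) <= kl q mu.
Proof.
move=> /andP[mu0 mu1] /andP[q0 q1]; rewrite /kl (gt_eqF q0).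
rewrite lnM ?posrE ?invr_gt0 // lnV ?posrE //.
apply: lerD => //; case: ifPn => // qn1.
have q1l : q < 1 by rewrite lt_neqAle qn1 q1.
have q1' : 0 < 1 - q by rewrite subr_gt0.
apply: ler_wpM2l; first exact: ltW.
rewrite ler_ln ?posrE ?divr_gt0 ?subr_gt0 //.
rewrite ler_pdivlMr ?subr_gt0 //; nra.
Qed.

Theorem lemma1 (R : realType) (n : nat) (m : 'I_n -> nat) (lam : R) :
  (0 < n)%N -> (forall i, (0 < m i)%N) -> 0 < lam ->
  (mmin m)%:R < lam ->
  forall B : R, exists mu : R, 0 < mu < 1 /\ B < Mgf m mu lam.
Proof.
move=> n0 m0 lam0 hlt B.
have [i0 hi0] := @ex_i0 n m n0.
set k := m i0.
have hk : k%:R < lam by apply: le_lt_trans hlt; rewrite ler_nat.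
set q : R := n%:R^-1.
have q0 : 0 < q by rewrite invr_gt0 ltr0n.
have q1 : q <= 1 by rewrite invf_le1 ?ltr0n // ler1n.
have nq : n%:R * q = 1 by rewrite mulfV // pnatr_eq0 -lt0n.
set c2 : R := if q == 1 then 0 else (1 - q) * ln (1 - q).
set P0 : R := \prod_(i < n | i != i0) (2^-1) ^+ m i.
have P0g : 0 < P0 by apply: prodr_gt0 => i _; apply: exprn_gt0; rewrite invr_gt0.
set D : R := ln P0 + lam * ln q + n%:R * lam * c2.
set c : R := lam - k%:R.
have c0 : 0 < c by rewrite subr_gt0.
set t : R := 1 + (`|ln (1 + `|B|)| + `|D|) / c.
have t1 : 1 <= t by rewrite /t lerDl; apply: divr_ge0; [by rewrite addr_ge0 | exact: ltW].
have ct : c * t = c + (`|ln (1 + `|B|)| + `|D|).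
  by rewrite /t mulrDr mulr1 mulrCA mulfV ?mulr1 // gt_eqF.
set mu := expR (- t).
have mu0 : 0 < mu by apply: expR_gt0.
have e1 : 2 <= expR (1 : R) by have := expR_ge1Dx (1 : R); rewrite (_ : 1 + 1 = 2 :> R).
have mu2 : mu <= 2^-1.
  rewrite /mu expRN -[X in _ <= X]invrK lef_pV2 ?posrE ?invr_gt0 ?expR_gt0 //.
  by rewrite invrK; apply: le_trans e1 _; rewrite ler_expR.
have mu1 : mu < 1 by lra.
have lnmu : ln mu = - t by rewrite /mu expRK.
exists mu; split; first by rewrite mu0 mu1.
rewrite /Mgf (bigD1 (@xs n m i0)) //=.
have rest : 0 <= \sum_(x | x != @xs n m i0) prob mu x * expR (n%:R * lam * kl (muhat R x) mu).
  apply: sumr_ge0 => x _; apply: mulr_ge0; last exact: ltW (expR_gt0 _).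
  by apply: prodr_ge0 => j _; case: (x j); lra.
suff : B < prob mu (@xs n m i0) * expR (n%:R * lam * kl (muhat R (@xs n m i0)) mu) by lra.
rewrite prob_xs muhat_xs //.
have Q : P0 <= \prod_(i < n | i != i0) (1 - mu) ^+ m i.
  apply: ler_prod => i _; rewrite exprn_ge0 ?invr_ge0 //=.
  by apply: lerXn2r; rewrite ?nnegrE //; lra.
have E : expR (n%:R * lam * (q * (ln q - ln mu) + c2)) <= expR (n%:R * lam * kl q mu).
  rewrite ler_expR; apply: ler_wpM2l; first by rewrite mulr_ge0 // ltW.
  by apply: kl_lb; rewrite ?mu0 ?mu1 ?q0 ?q1.
have E2 : n%:R * lam * (q * (ln q - ln mu) + c2) = lam * ln q + lam * t + n%:R * lam * c2.
  rewrite lnmu mulrDr (_ : n%:R * lam * (q * (ln q - - t)) = lam * (ln q - - t) * (n%:R * q)); last by ring.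
  rewrite nq mulr1; ring.
rewrite E2 in E.
have M : mu ^+ k = expR (- t * k%:R) by rewrite expRM_natr.
have L : expR (D + c * t) <= mu ^+ k * \prod_(i < n | i != i0) (1 - mu) ^+ m i * expR (n%:R * lam * kl q mu).
  apply: le_trans (_ : mu ^+ k * P0 * expR (lam * ln q + lam * t + n%:R * lam * c2) <= _).
    have eP : expR (ln P0) = P0 by rewrite lnK // posrE.
    rewrite M -[X in _ <= _ * X * _]eP -!expRD le_eqVlt; apply/orP; left; apply/eqP; congr expR.
    rewrite /D /c; lra.
  apply: ler_pM => //; first by rewrite mulr_ge0 // ?exprn_ge0 // ltW.
  by apply: ler_wpM2l => //; apply: exprn_ge0; exact: ltW.
apply: lt_le_trans L.
have : ln (1 + `|B|) < D + c * t.
  rewrite ct; have := ler_norm (ln (1 + `|B|)); have := ler_normr D; have := ler_norm (- D).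
  rewrite normrN; lra.
rewrite -ltr_expR lnK ?posrE; last by rewrite ltr_pwDl.
have := ler_norm B; lra.
Qed.
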